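(* Let $\Gamma$ be a finite simple graph and let $\omega\ge 2$ be an integer. If $\Gamma$ is $\omega$-clique regular, then $\omega=2$ or $\omega=\omega(\Gamma)$.
   Context: A clique of order $\omega$ ($\omega$-clique) is a set of $\omega$ pairwise adjacent vertices. A graph $\Gamma$ is $\omega$-clique regular if it has a nonempty edge set and every edge of $\Gamma$ is contained in exactly one clique of order $\omega$. $\omega(\Gamma)$ denotes the clique number of $\Gamma$, the maximum order of a clique in $\Gamma$. *)

(* Defs.v *)
From mathcomp Require Import all_boot.
Set Implicit Arguments. Unset Strict Implicit. Unset Printing Implicit Defensive.

Definition simple_graph (T : finType) (e : rel T) : Prop :=
  symmetric e /\ irreflexive e.

Definition is_clique (T : finType) (e : rel T) (K : {set T}) : bool :=
  [forall x in K, forall y in K, (x != y) ==> e x y].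

Definition clique_number (T : finType) (e : rel T) : nat :=
  \max_(K : {set T} | is_clique e K) #|K|.

Definition clique_regular (T : finType) (e : rel T) (w : nat) : Prop :=
  (exists x y, e x y) /\
  forall x y, e x y ->
    exists! K : {set T}, [/\ is_clique e K, #|K| = w, x \in K & y \in K].

(* Main.v *)
Require Import Defs.
From mathcomp Require Import all_boot.
From mathcomp Require Import zify.

Lemma ex_subset_card (T : finType) n (K : {set T}) :
  n <= #|K| -> exists2 S : {set T}, S \subset K & #|S| = n.
Proof.
elim: n => [|n IH] H.
  by exists set0; rewrite ?sub0set ?cards0.
have [S SK cS] := IH (ltnW H).
have : 0 < #|K :\: S|.
  by rewrite cardsD (setIidPr SK) cS subn_gt0.
rewrite card_gt0 => /set0Pn [u]; rewrite inE => /andP [uS uK].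
exists (u |: S); first by rewrite subUset sub1set uK SK.
by rewrite cardsU1 uS cS.
Qed.

Lemma clique_sub (T : finType) (e : rel T) (K A : {set T}) :
  is_clique e K -> A \subset K -> is_clique e A.
Proof.
move=> /forall_inP HK AK; apply/forall_inP => x xA; apply/forall_inP => y yA.
by have /forall_inP := HK x (subsetP AK x xA); apply; apply: (subsetP AK).
Qed.

Lemma pick_in (T : finType) (A : {set T}) : 0 < #|A| -> exists x, x \in A.
Proof. by rewrite card_gt0 => /set0Pn. Qed.

Theorem theorem1 (T : finType) (e : rel T) (w : nat) :
  simple_graph e -> 2 <= w -> clique_regular e w ->
  w = 2 \/ w = clique_number e.
Proof.
move=> [esym eirr] w2 [[x0 [y0 e0]] Hreg].
have [->|wn2] := eqVneq w 2; first by left.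
have w3 : 3 <= w by rewrite ltn_neqAle eq_sym wn2 w2.
right; apply/eqP; rewrite eqn_leq; apply/andP; split.
  have [K [[cK sK _ _] _]] := Hreg _ _ e0.
  by rewrite -sK; apply: (leq_bigmax_cond (F := fun K : {set T} => #|K|)).
apply/bigmax_leqP => K cK; rewrite leqNgt; apply/negP => Kw.
have [S SK cS] := @ex_subset_card T _ K Kw.
have cSc : is_clique e S := @clique_sub T e K S cK SK.
have [x xS] : exists x, x \in S by apply: pick_in; rewrite cS.
have c1 : #|S :\ x| = w by move: (cardsD1 x S) cS; rewrite xS /=; lia.
have [y yS] : exists y, y \in S :\ x by apply: pick_in; rewrite c1 ltnW.
have c2 : #|S :\ x :\ y| = w.-1 by move: (cardsD1 y (S :\ x)) c1; rewrite yS /=; lia.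
have [z1 z1S] : exists z, z \in S :\ x :\ y
  by apply: pick_in; rewrite c2 -ltnS prednK ltnW // ltnW.
have c3 : #|S :\ x :\ y :\ z1| = w.-2
  by move: (cardsD1 z1 (S :\ x :\ y)) c2; rewrite z1S /=; lia.
have [z2 z2S] : exists z, z \in S :\ x :\ y :\ z1
  by apply: pick_in; rewrite c3 -subn2 subn_gt0.
move: z2S z1S yS; rewrite !inE => /and4P [z2z1 z2y z2x z2S] /and3P [z1y z1x z1S] /andP [yx yS].
have exy : e x y.
  by have /forall_inP /(_ x xS) /forall_inP /(_ y yS) := cSc; rewrite eq_sym yx.
have [K0 [_ uK]] := Hreg _ _ exy.
have cA : #|S :\ z2| = w by move: (cardsD1 z2 S); rewrite z2S cS /= add1n => -[<-].
have cB : #|S :\ z1| = w by move: (cardsD1 z1 S); rewrite z1S cS /= add1n => -[<-].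
have hA := uK (S :\ z2).
have hB := uK (S :\ z1).
have HA : S :\ z2 = K0.
  symmetry; apply: hA; split => //; first exact: @clique_sub T e S _ cSc (subD1set _ _).
    by rewrite !inE xS andbT eq_sym z2x.
  by rewrite !inE yS andbT eq_sym z2y.
have HB : S :\ z1 = K0.
  symmetry; apply: hB; split => //; first exact: @clique_sub T e S _ cSc (subD1set _ _).
    by rewrite !inE xS andbT eq_sym z1x.
  by rewrite !inE yS andbT eq_sym z1y.
have : z1 \in S :\ z2 by rewrite !inE z1S andbT eq_sym z2z1.
by rewrite HA -HB !inE eqxx.
Qed.
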